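(* Let $\bm\sigma=\sigma_1\bm e_1+\dots+\sigma_r\bm e_r\in\mathbb{Z}^r$ be a changemaker vector with $\sigma_r\ge2$ and let $L=\langle\bm\sigma\rangle^\perp\subseteq\mathbb{Z}^r$. Then any obtuse superbase for $L$ contains at most one reducible vector. In particular, any obtuse superbase for $L$ contains a basis of $L$ consisting of irreducible vectors.
   Context: $\mathbb{Z}^r$ has the standard pairing. A changemaker vector is $\bm\sigma=\sum\sigma_i\bm e_i$ (in some orthonormal basis) with $\sigma_1=1$ and $\sigma_{i-1}\le\sigma_i\le1+\sigma_1+\dots+\sigma_{i-1}$. An obtuse superbase of a rank-$k$ lattice $L$ is a spanning set $\{v_0,\dots,v_k\}$ with $v_i\cdot v_j\le 0$ for $i\ne j$ and $\sum v_i=0$. A non-zero $v\in L$ is irreducible if whenever $v=x+y$ with $x,y\in L$ non-zero we have $x\cdot y\le -1$; otherwise it is reducible. *)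

(* Defs.v *)
From mathcomp Require Import all_boot all_order all_algebra.
Set Implicit Arguments. Unset Strict Implicit. Unset Printing Implicit Defensive.
Import Order.TTheory GRing.Theory Num.Theory.
Local Open Scope ring_scope.

Definition dot (r : nat) (x y : 'rV[int]_r) : int := \sum_(i < r) x ord0 i * y ord0 i.

(* changemaker vector (0-indexed: entry 0 is sigma_1) *)
Definition changemaker (r : nat) (s : 'rV[int]_r) : Prop :=
  (forall i : 'I_r, val i = 0%N -> s ord0 i = 1) /\
  (forall i j : 'I_r, val j = (val i).+1 ->
     s ord0 i <= s ord0 j /\ s ord0 j <= 1 + \sum_(k < r | (k <= i)%N) s ord0 k).

Definition inL (r : nat) (s x : 'rV[int]_r) : Prop := dot x s = 0.

Definition spansL (r : nat) (s : 'rV[int]_r) (I : finType) (P : pred I)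
  (w : I -> 'rV[int]_r) : Prop :=
  (forall i, P i -> inL s (w i)) /\
  (forall x, inL s x -> exists c : I -> int, x = \sum_(i | P i) c i *: w i).

Definition basisL (r : nat) (s : 'rV[int]_r) (I : finType) (P : pred I)
  (w : I -> 'rV[int]_r) : Prop :=
  spansL s P w /\
  (forall c : I -> int, \sum_(i | P i) c i *: w i = 0 -> forall i, P i -> c i = 0).

(* obtuse superbase {v_0, ..., v_k} of L (L of rank k) *)
Definition obtuse_superbase (r k : nat) (s : 'rV[int]_r) (v : 'I_k.+1 -> 'rV[int]_r)
  : Prop :=
  spansL s predT v /\
  (forall i j, i != j -> dot (v i) (v j) <= 0) /\
  \sum_i v i = 0.

Definition irreducible (r : nat) (s v : 'rV[int]_r) : Prop :=
  inL s v /\ v != 0 /\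
  (forall x y, inL s x -> inL s y -> x != 0 -> y != 0 -> v = x + y -> dot x y <= -1).

Definition reducible (r : nat) (s v : 'rV[int]_r) : Prop :=
  inL s v /\ v != 0 /\ ~ irreducible s v.

(* Main.v *)
Require Import Defs.
From mathcomp Require Import all_boot all_order all_algebra.
From mathcomp Require Import zify ring lra.
From Stdlib Require Import Classical.
Import Order.TTheory GRing.Theory Num.Theory.
Local Open Scope ring_scope.
Set Implicit Arguments. Unset Strict Implicit. Unset Printing Implicit Defensive.

Section Dot.
Variable r : nat.
Implicit Types x y z : 'rV[int]_r.

Lemma dotC x y : dot x y = dot y x.
Proof. by rewrite /dot; apply: eq_bigr => i _; rewrite mulrC. Qed.

Lemma dotDl x y z : dot (x + y) z = dot x z + dot y z.
Proof. by rewrite /dot -big_split; apply: eq_bigr => i _; rewrite mxE mulrDl. Qed.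

Lemma dotZl a x y : dot (a *: x) y = a * dot x y.
Proof. by rewrite /dot mulr_sumr; apply: eq_bigr => i _; rewrite mxE mulrA. Qed.

Lemma dot0l y : dot 0 y = 0.
Proof. by rewrite /dot big1 // => i _; rewrite mxE mul0r. Qed.

Lemma dotNl x y : dot (- x) y = - dot x y.
Proof. by rewrite -scaleN1r dotZl mulN1r. Qed.

Lemma dotBl x y z : dot (x - y) z = dot x z - dot y z.
Proof. by rewrite dotDl dotNl. Qed.

Lemma dotDr x y z : dot z (x + y) = dot z x + dot z y.
Proof. by rewrite dotC dotDl !(dotC z). Qed.
Lemma dotZr a x y : dot y (a *: x) = a * dot y x.
Proof. by rewrite dotC dotZl dotC. Qed.
Lemma dot0r y : dot y 0 = 0.
Proof. by rewrite dotC dot0l. Qed.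
Lemma dotNr x y : dot y (- x) = - dot y x.
Proof. by rewrite dotC dotNl dotC. Qed.
Lemma dotBr x y z : dot z (x - y) = dot z x - dot z y.
Proof. by rewrite dotDr dotNr. Qed.

Lemma dot_suml (I : Type) (s : seq I) (P : pred I) (F : I -> 'rV[int]_r) y :
  dot (\sum_(i <- s | P i) F i) y = \sum_(i <- s | P i) dot (F i) y.
Proof.
by apply: (big_morph (fun x => dot x y)); [move=> a b; rewrite dotDl | rewrite dot0l].
Qed.

Lemma dot_sumr (I : Type) (s : seq I) (P : pred I) (F : I -> 'rV[int]_r) y :
  dot y (\sum_(i <- s | P i) F i) = \sum_(i <- s | P i) dot y (F i).
Proof.
rewrite dotC dot_suml; apply: eq_bigr => i _; exact: dotC.
Qed.

Lemma dot_self_ge0 x : 0 <= dot x x.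
Proof. by rewrite /dot sumr_ge0 // => i _; rewrite -expr2 sqr_ge0. Qed.

Lemma dot_self_eq0 x : dot x x = 0 -> x = 0.
Proof.
move=> h; apply/rowP => i; rewrite mxE.
have hp : forall j : 'I_r, predT j -> 0 <= x ord0 j * x ord0 j.
  by move=> j _; rewrite -expr2 sqr_ge0.
have := @psumr_eq0P _ _ predT (fun i => x ord0 i * x ord0 i) hp h i isT.
by rewrite -expr2 => /eqP; rewrite sqrf_eq0 => /eqP.
Qed.
End Dot.
Section CM.
Variable n : nat.
Variable s : 'rV[int]_(n.+1).
Hypothesis hs : changemaker s.

Local Notation vec := 'rV[int]_(n.+1).
Local Notation sg i := (s ord0 i).

Definition ev (k : 'I_(n.+1)) : vec := \row_i ((i == k)%:R : int).

Lemma dot_evl k y : dot (ev k) y = y ord0 k.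
Proof.
rewrite /dot (bigD1 k) //= big1 => [|i /negbTE hi]; first by rewrite mxE eqxx mul1r addr0.
by rewrite mxE hi mul0r.
Qed.
Lemma dot_evr k y : dot y (ev k) = y ord0 k.
Proof. by rewrite dotC dot_evl. Qed.

Definition psum (m : nat) : int := \sum_(i < n.+1 | (i < m)%N) sg i.

Lemma sg0 : sg ord0 = 1.
Proof. by case: hs => h _; apply: h. Qed.

Lemma sg_step (k : nat) : (k < n)%N ->
  sg (inord k) <= sg (inord k.+1) /\ sg (inord k.+1) <= 1 + psum k.+1.
Proof.
move=> hk; case: hs => _ /(_ (inord k) (inord k.+1)).
have e1 : nat_of_ord (inord k : 'I_(n.+1)) = k by rewrite inordK //; lia.
have e2 : nat_of_ord (inord k.+1 : 'I_(n.+1)) = k.+1 by rewrite inordK //; lia.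
rewrite /= e1 e2 => /(_ erefl) [h1 h2]; split=> //.
Qed.

Lemma sg_mono_nat (k l : nat) : (k <= l)%N -> (l <= n)%N -> sg (inord k) <= sg (inord l).
Proof.
elim: l => [|l IH] hkl hl; first by have -> : k = 0%N by lia.
case: (ltngtP k l.+1) => h; [|lia|by rewrite h].
apply: le_trans (IH _ _) (proj1 (sg_step _)); lia.
Qed.

Lemma sg_mono (i j : 'I_(n.+1)) : (i <= j)%N -> sg i <= sg j.
Proof.
move=> h; rewrite -(inord_val i) -(inord_val j); apply: sg_mono_nat => //.
by have := ltn_ord j; lia.
Qed.

Lemma sg_ge1 i : 1 <= sg i.
Proof. by rewrite -sg0; apply: sg_mono. Qed.

Lemma sg_gt0 i : 0 < sg i.
Proof. exact: lt_le_trans (sg_ge1 i). Qed.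

Lemma cm_bound (j : 'I_(n.+1)) : sg j <= 1 + psum j.
Proof.
case: j => [[|k] hk].
  rewrite /psum big_pred0 // addr0.
  by rewrite (_ : Ordinal hk = ord0) ?sg0 //; apply: val_inj.
have hk' : (k < n)%N by lia.
have [_ h] := sg_step hk'.
have -> : Ordinal hk = inord k.+1 by apply: val_inj; rewrite /= inordK.
by rewrite inordK.
Qed.

Lemma psumS (m : nat) : (m <= n)%N -> psum m.+1 = psum m + sg (inord m).
Proof.
move=> hm; rewrite /psum (bigD1 (inord m)) /=; last by rewrite inordK; lia.
rewrite addrC; congr (_ + _); apply: eq_bigl => i.
apply/idP/idP.
  move=> /andP [h1 /eqP h2]; have : nat_of_ord i <> m by move=> e; apply: h2; apply: val_inj; rewrite /= inordK //.
  lia.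
move=> h; apply/andP; split; first lia.
by apply/eqP => e; move: h; rewrite e inordK //; lia.
Qed.

Lemma psum0 : psum 0 = 0.
Proof. by rewrite /psum big_pred0. Qed.

Lemma subset_sum (m : nat) : (m <= n.+1)%N -> forall t : int, 0 <= t <= psum m ->
  exists chi : vec, (forall i, chi ord0 i = 0 \/ chi ord0 i = 1) /\
    (forall i : 'I_(n.+1), (m <= i)%N -> chi ord0 i = 0) /\ dot chi s = t.
Proof.
elim: m => [|m IH] hm t /andP [t0 tm].
  exists 0; split; first by move=> i; left; rewrite mxE.
  split; first by move=> i _; rewrite mxE.
  by rewrite dot0l; move: tm; rewrite psum0; lia.
move: tm; rewrite psumS; last lia.
case: (lerP (sg (inord m)) t) => ht tm.
  have [chi [c01 [csupp cdot]]] := IH (ltnW hm) (t - sg (inord m)) ltac:(apply/andP; split; lia).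
  exists (chi + ev (inord m)); split.
    move=> i; rewrite !mxE; case: (eqVneq i (inord m)) => [->|hi].
      rewrite csupp; last by rewrite inordK //; lia.
      by right; rewrite add0r.
    by rewrite /= addr0; apply: c01.
  split.
    move=> i hi; rewrite !mxE csupp; last lia.
    suff -> : (i == inord m) = false by [].
    by apply/negbTE/eqP => e; move: hi; rewrite e inordK; lia.
  by rewrite dotDl cdot dot_evl; ring.
have htm : t <= psum m by have := cm_bound (inord m); rewrite inordK; lia.
have [chi [c01 [csupp cdot]]] := IH (ltnW hm) t ltac:(apply/andP; split; done).
by exists chi; split=> //; split=> // i hi; apply: csupp; lia.
Qed.

Definition indec (x : vec) := forall y z, inL s y -> inL s z -> y + z = x ->
  dot y z = 0 -> y = 0 \/ z = 0.

Lemma nonneg_inL0 y : inL s y -> (forall i, 0 <= y ord0 i) -> y = 0.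
Proof.
move=> hy hpos; apply/rowP => i; rewrite mxE.
have hp : forall j : 'I_(n.+1), predT j -> 0 <= y ord0 j * s ord0 j.
  by move=> j _; rewrite mulr_ge0 // ltW // sg_gt0.
have := @psumr_eq0P _ _ predT (fun i => y ord0 i * s ord0 i) hp hy i isT.
move/eqP; rewrite mulf_eq0 => /orP [/eqP //|].
by rewrite gt_eqF // sg_gt0.
Qed.

Lemma sum_npos_eq0 (F : 'I_(n.+1) -> int) : \sum_i F i = 0 -> (forall i, F i <= 0) ->
  forall i, F i = 0.
Proof.
move=> hs0 hF i.
have hp : forall j : 'I_(n.+1), predT j -> 0 <= - F j by move=> j _; rewrite oppr_ge0.
have h0 : \sum_(j | predT j) - F j = 0 by rewrite sumrN hs0 oppr0.
by have := @psumr_eq0P _ _ predT (fun j => - F j) hp h0 i isT; move/eqP; rewrite oppr_eq0 => /eqP.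
Qed.

Lemma entryD (x y : vec) k : (x + y) ord0 k = x ord0 k + y ord0 k.
Proof. by rewrite mxE. Qed.

Lemma indecA (t : vec) (j : 'I_(n.+1)) : t ord0 j = -1 ->
  (forall k, k != j -> t ord0 k = 0 \/ t ord0 k = 1) -> indec t.
Proof.
move=> tj tk y z hy hz hyz hd.
have ht : forall k, y ord0 k + z ord0 k = t ord0 k by move=> k; rewrite -hyz entryD.
have hf : forall k, y ord0 k * z ord0 k = 0.
  apply: sum_npos_eq0 => // k; have := ht k.
  case: (eqVneq k j) => [->|hk]; first by rewrite tj; nia.
  by case: (tk k hk) => ->; nia.
case: (eqVneq (y ord0 j) 0) => hyj.
  left; apply: nonneg_inL0 => // k; have := hf k; have := ht k.
  case: (eqVneq k j) => [->|hk]; first by rewrite hyj.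
  by case: (tk k hk) => ->; nia.
right; apply: nonneg_inL0 => // k; have := hf k; have := ht k.
case: (eqVneq k j) => [->|hk]; first by move: hyj; nia.
by case: (tk k hk) => ->; nia.
Qed.

Lemma indec_aux (y z t : vec) (j : 'I_(n.+1)) : inL s y -> inL s z ->
  (forall k, y ord0 k + z ord0 k = t ord0 k) -> (forall k, y ord0 k * z ord0 k = 0) ->
  (forall k, k != j -> 0 <= t ord0 k) -> y = 0 \/ z = 0.
Proof.
move=> hy hz ht hf htp.
case: (eqVneq (y ord0 j) 0) => hyj.
  left; apply: nonneg_inL0 => // k; have := hf k; have := ht k.
  case: (eqVneq k j) => [->|hk]; first by rewrite hyj.
  by have := htp k hk; nia.
right; apply: nonneg_inL0 => // k; have := hf k; have := ht k.
case: (eqVneq k j) => [->|hk]; first by move: hyj; nia.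
by have := htp k hk; nia.
Qed.

Lemma sum_ge_m1 (G : 'I_(n.+1) -> int) : \sum_i G i = -1 -> (forall i, G i <= 0) ->
  forall i, -1 <= G i.
Proof.
move=> hs0 hG i; move: hs0; rewrite (bigD1 i) //=; set S := (X in _ + X = _) => hS.
have : S <= 0 by rewrite /S; apply: sumr_le0 => k _; apply: hG.
lia.
Qed.

Lemma indecB (t : vec) (j : 'I_(n.+1)) : (0 < j)%N -> sg j = 1 + psum j ->
  t ord0 ord0 = 2 -> (forall k : 'I_(n.+1), (0 < k < j)%N -> t ord0 k = 1) ->
  t ord0 j = -1 -> (forall k : 'I_(n.+1), (j < k)%N -> t ord0 k = 0) -> indec t.
Proof.
move=> hj htight ht0 ht1 htj ht2 y z hy hz hyz hd.
have ht : forall k, y ord0 k + z ord0 k = t ord0 k by move=> k; rewrite -hyz entryD.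
have htp : forall k, k != j -> 0 <= t ord0 k.
  move=> k hk; case: (eqVneq k ord0) => [->|hk0]; first by rewrite ht0.
  case: (ltngtP j k) => h; first by rewrite ht2.
    by rewrite ht1 //; apply/andP; split=> //; rewrite lt0n; apply: contra hk0 => /eqP e; apply/eqP; apply: val_inj.
  by move: hk; rewrite (_ : k = j) ?eqxx //; apply: val_inj.
have hF : forall k, k != ord0 -> y ord0 k * z ord0 k <= 0.
  move=> k hk0; have := ht k; case: (eqVneq k j) => [->|hk]; first by rewrite htj; nia.
  case: (ltngtP j k) => h; first by rewrite ht2 //; nia.
    rewrite ht1; [nia|]; apply/andP; split=> //; rewrite lt0n; apply: contra hk0 => /eqP e; apply/eqP; apply: val_inj; exact: e.
  by move: hk; rewrite (_ : k = j) ?eqxx //; apply: val_inj.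
case: (eqVneq (y ord0 ord0) 1) => hy0; last first.
  apply: (indec_aux hy hz ht _ htp); apply: sum_npos_eq0 => // k.
  case: (eqVneq k ord0) => [->|hk0]; last exact: hF.
  by have := ht ord0; rewrite ht0; move: hy0; nia.
exfalso.
pose G k := if k == ord0 then 0 else y ord0 k * z ord0 k.
have hG : \sum_k G k = -1.
  move: hd; rewrite /dot (bigD1 ord0) //= => hd.
  rewrite (bigD1 ord0) //= /G eqxx add0r.
  have -> : \sum_(i < n.+1 | i != ord0) (if i == ord0 then 0 else y ord0 i * z ord0 i) =
            \sum_(i < n.+1 | i != ord0) y ord0 i * z ord0 i.
    by apply: eq_bigr => i /negbTE ->.
  have hz0 : z ord0 ord0 = 1 by have := ht ord0; rewrite ht0 hy0; lia.
  by move: hd; rewrite hy0 hz0 mul1r => /eqP; rewrite addrC addr_eq0 => /eqP ->.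
have hGn : forall k, G k <= 0 by move=> k; rewrite /G; case: eqP => // /eqP; apply: hF.
have hG1 := sum_ge_m1 hG hGn.
have hmid : forall k : 'I_(n.+1), (0 < k < j)%N -> y ord0 k = 0 \/ y ord0 k = 1.
  move=> k hk; have := hG1 k; have := ht k; rewrite ht1 // /G.
  have -> : (k == ord0) = false by apply/negbTE/eqP => e; move: hk; rewrite e.
  nia.
have hyj : y ord0 j = 0 \/ y ord0 j = -1.
  have := hG1 j; have := ht j; rewrite htj /G.
  have -> : (j == ord0) = false by apply/negbTE/eqP => e; move: hj; rewrite e.
  nia.
have hhi : forall k : 'I_(n.+1), (j < k)%N -> -1 <= y ord0 k <= 1.
  move=> k hk; have := hG1 k; have := ht k; rewrite ht2 // /G.
  have -> : (k == ord0) = false by apply/negbTE/eqP => e; move: hk; rewrite e.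
  nia.
have hGle : forall k : 'I_(n.+1), (k <= j)%N -> G k = 0.
  move=> k hk; rewrite /G; case: eqP => // /eqP hk0.
  have k0 : (0 < k)%N by rewrite lt0n; apply: contra hk0 => /eqP e; apply/eqP; apply: val_inj; exact: e.
  case: (ltngtP k j) => h; [|lia|].
    by have := ht k; rewrite ht1 ?k0 //; case: (hmid k) => [|->|->]; rewrite ?k0 //; lia.
  by rewrite (_ : k = j); [have := ht j; rewrite htj; case: hyj => ->; lia | apply: val_inj].
have hsq : \sum_(k < n.+1 | (j < k)%N) y ord0 k ^+ 2 = 1.
  move: hG; rewrite (bigID (fun k : 'I_(n.+1) => (k <= j)%N)) /= big1; last first.
    by move=> k /hGle.
  rewrite add0r => hG; rewrite -[1]opprK -hG -sumrN; apply: eq_big => k.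
    by rewrite -ltnNge.
  move=> hk; rewrite /G.
  have -> : (k == ord0) = false by apply/negbTE/eqP => e; move: hk; rewrite e.
  have := ht k; rewrite ht2 // => h; have -> : z ord0 k = - y ord0 k by lia.
  by rewrite mulrN opprK expr2.
have hdot : \sum_(k < n.+1 | (k <= j)%N) y ord0 k * sg k +
            \sum_(k < n.+1 | (j < k)%N) y ord0 k * sg k = 0.
  move: hy; rewrite /inL /dot (bigID (fun k : 'I_(n.+1) => (k <= j)%N)) /=.
  by under [X in _ + X]eq_bigl => k do rewrite -ltnNge.
have hC : \sum_(k < n.+1 | (k <= j)%N) y ord0 k * sg k =
          \sum_(k < n.+1 | (k < j)%N) y ord0 k * sg k + y ord0 j * sg j.
  rewrite (bigD1 j) //= addrC; congr (_ + _); apply: eq_bigl => k.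
  apply/idP/idP => [/andP [h1 h2]|h]; first by rewrite ltn_neqAle h1 andbT; exact: h2.
  by rewrite ltnW //=; move: h; rewrite ltn_neqAle => /andP [].
have hCup : \sum_(k < n.+1 | (k < j)%N) y ord0 k * sg k <= psum j.
  apply: ler_sum => k hk; apply: ler_piMl; first exact: ltW (sg_gt0 _).
  case: (eqVneq k ord0) => [->|hk0]; first by rewrite hy0.
  have k0 : (0 < k)%N by rewrite lt0n; apply: contra hk0 => /eqP e; apply/eqP; apply: val_inj; exact: e.
  by case: (hmid k) => [|->|->] //; rewrite k0.
have hClo : 1 <= \sum_(k < n.+1 | (k < j)%N) y ord0 k * sg k.
  rewrite (bigD1 ord0) //= hy0 sg0 mul1r lerDl; apply: sumr_ge0 => k /andP [hk hk0].
  have k0 : (0 < k)%N by rewrite lt0n; apply: contra hk0 => /eqP e; apply/eqP; apply: val_inj; exact: e.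
  by apply: mulr_ge0; [case: (hmid k) => [|->|->] //; rewrite k0 | apply: ltW; apply: sg_gt0].
have [k /andP [hk hyk]] : exists k : 'I_(n.+1), (j < k)%N && (y ord0 k != 0).
  apply/existsP; apply: contraT; rewrite negb_exists => /forallP hall.
  move: hsq; rewrite big1 // => i hi; have := hall i; rewrite hi /= negbK => /eqP ->.
  by rewrite expr0n.
have hrest : \sum_(i < n.+1 | (j < i)%N && (i != k)) y ord0 i ^+ 2 = 0.
  move: hsq; rewrite (bigD1 k) //=.
  have : 0 <= \sum_(i < n.+1 | (j < i)%N && (i != k)) y ord0 i ^+ 2 by apply: sumr_ge0 => i _; apply: sqr_ge0.
  have := hhi k hk; move: hyk; set S := \sum_(i < n.+1 | _) _; nia.
have hB : \sum_(i < n.+1 | (j < i)%N) y ord0 i * sg i = y ord0 k * sg k.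
  rewrite (bigD1 k) //= big1 ?addr0 // => i hi.
  have hp : forall i0 : 'I_(n.+1), (j < i0)%N && (i0 != k) -> 0 <= y ord0 i0 ^+ 2 by move=> ? _; apply: sqr_ge0.
  have := @psumr_eq0P _ _ _ _ hp hrest i hi; move/eqP; rewrite sqrf_eq0 => /eqP ->; exact: mul0r.
have hmono : sg j <= sg k by apply: sg_mono; apply: ltnW.
have hyk1 := hhi k hk.
rewrite hC hB in hdot.
set C := \sum_(i < n.+1 | (i < j)%N) y ord0 i * sg i in hCup hClo hdot.
have hsk := sg_gt0 k.
case: hyj => hyj; rewrite hyj in hdot; nia.
Qed.

Definition chiF (j : nat) : vec := \row_k (((k < j)%N)%:R : int).

Lemma dot_chiF j : dot (chiF j) s = psum j.
Proof.
rewrite /dot /psum [RHS]big_mkcond; apply: eq_bigr => k _; rewrite mxE.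
by case: (k < j)%N; rewrite ?mul1r ?mul0r.
Qed.

Lemma exists_u (j : 'I_(n.+1)) : (0 < j)%N -> exists u : vec,
  [/\ inL s u, u ord0 j = -1, (forall k : 'I_(n.+1), (j < k)%N -> u ord0 k = 0) & indec u].
Proof.
move=> hj.
case: (lerP (sg j) (psum j)) => hle.
  have [chi [c01 [csupp cdot]]] := subset_sum (ltnW (ltn_ord j)) (t := sg j)
     ltac:(apply/andP; split; [exact: ltW (sg_gt0 _) | exact: hle]).
  exists (chi - ev j); split.
  - by rewrite /inL dotBl cdot dot_evl subrr.
  - by rewrite !mxE eqxx csupp.
  - move=> k hk; rewrite !mxE csupp ?(ltnW hk) //.
    suff -> : (k == j) = false by rewrite subrr.
    by apply/negbTE/eqP => e; move: hk; rewrite e ltnn.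
  apply: (@indecA _ j); first by rewrite !mxE eqxx csupp.
  by move=> k /negbTE hk; rewrite !mxE hk subr0; apply: c01.
have htight : sg j = 1 + psum j by have := cm_bound j; lia.
exists (chiF j + ev ord0 - ev j).
have hj0 : (j == ord0) = false by apply/negbTE/eqP => e; move: hj; rewrite e.
split.
- by rewrite /inL dotBl dotDl dot_chiF !dot_evl sg0 htight; ring.
- by rewrite !mxE ltnn eqxx hj0.
- move=> k hk; rewrite !mxE.
  have -> : (k == j) = false by apply/negbTE/eqP => e; move: hk; rewrite e ltnn.
  have -> : (k == ord0) = false by apply/negbTE/eqP => e; move: hk; rewrite e.
  by rewrite ltnNge ltnW.
apply: (indecB hj htight).
- by rewrite !mxE /= hj eq_sym hj0.
- move=> k /andP [k0 kj]; rewrite !mxE kj.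
  have -> : (k == j) = false by apply/negbTE/eqP => e; move: kj; rewrite e ltnn.
  have -> : (k == ord0) = false by apply/negbTE/eqP => e; move: k0; rewrite e.
  by [].
- by rewrite !mxE ltnn eqxx hj0.
move=> k hk; rewrite !mxE.
have -> : (k == j) = false by apply/negbTE/eqP => e; move: hk; rewrite e ltnn.
have -> : (k == ord0) = false by apply/negbTE/eqP => e; move: hk; rewrite e.
by rewrite ltnNge ltnW.
Qed.

Lemma sum_supp (F : 'I_(n.+1) -> int) (m : nat) :
  (forall k : 'I_(n.+1), (m <= k)%N -> F k = 0) -> \sum_k F k = \sum_(k < n.+1 | (k < m)%N) F k.
Proof.
move=> hF; rewrite [RHS]big_mkcond; apply: eq_bigr => k _.
by case: ltnP => // h; rewrite hF.
Qed.

Lemma supp_zero (x : vec) : inL s x -> (forall k : 'I_(n.+1), (1 <= k)%N -> x ord0 k = 0) -> x = 0.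
Proof.
move=> hx hk; apply: nonneg_inL0 => // k.
case: (posnP k) => h; last by rewrite hk.
move: hx; rewrite /inL /dot (sum_supp (m := 1)); last by move=> i hi; rewrite hk // mul0r.
rewrite (big_pred1 ord0); last by move=> i; rewrite /= ltnS leqn0.
rewrite sg0 mulr1 => e; rewrite (_ : k = ord0) ?e //; exact: val_inj.
Qed.

Variable u : 'I_(n.+1) -> vec.
Hypothesis hu : forall j : 'I_(n.+1), (0 < j)%N ->
  [/\ inL s (u j), u j ord0 j = -1, (forall k : 'I_(n.+1), (j < k)%N -> u j ord0 k = 0) & indec (u j)].

Lemma orth_span (m : nat) (y : vec) :
  (forall j : 'I_(n.+1), (0 < j)%N -> (j < m)%N -> dot y (u j) = 0) ->
  forall x, inL s x -> (forall k : 'I_(n.+1), (m <= k)%N -> x ord0 k = 0) -> dot y x = 0.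
Proof.
elim: m => [|m IH] hy x hx hsupp.
  by rewrite (supp_zero hx) ?dot0r // => k _; apply: hsupp.
case: (posnP m) => hm.
  by rewrite (supp_zero hx) ?dot0r // => k hk; apply: hsupp; rewrite hm.
case: (leqP n.+1 m) => hmn.
  apply: IH => // [j j0 jm|k hk]; first by apply: hy => //; lia.
  by have := ltn_ord k; lia.
pose M : 'I_(n.+1) := inord m.
have hM : nat_of_ord M = m by rewrite inordK.
have [uL um uz _] := hu (ltac:(rewrite hM; exact: hm) : (0 < M)%N).
pose x' := x + x ord0 M *: u M.
have -> : x = x' - x ord0 M *: u M by rewrite /x' addrK.
rewrite dotBr dotZr (hy M) ?hM // mulr0 subr0.
apply: IH.
- by move=> j j0 jm; apply: hy => //; lia.
- by rewrite /inL /x' dotDl dotZl uL mulr0 addr0.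
move=> k hk; rewrite /x' !mxE.
case: (ltngtP m k) => h.
- by rewrite (hsupp k h) (uz k) ?hM // mulr0 addr0.
- lia.
have -> : k = M by apply: val_inj; rewrite /= hM.
by rewrite um mulrN1 subrr.
Qed.

Lemma ones_prefix (m : 'I_(n.+1)) : (0 < m)%N ->
  (forall x, inL s x -> (forall k : 'I_(n.+1), (m <= k)%N -> x ord0 k = 0) -> dot (u m) x = 0) ->
  forall i : 'I_(n.+1), (i < m)%N -> sg i = 1.
Proof.
move=> hm horth.
have [yL ym yz _] := hu hm.
set y := u m in yL ym yz horth.
have hyi : forall i : 'I_(n.+1), (i < m)%N -> y ord0 i = sg i * y ord0 ord0.
  move=> i hi; case: (eqVneq i ord0) => [->|hi0]; first by rewrite sg0 mul1r.
  have hx1 : inL s (ev i - sg i *: ev ord0).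
    by rewrite /inL dotBl dotZl !dot_evl sg0 mulr1 subrr.
  have hx2 : forall k : 'I_(n.+1), (m <= k)%N -> (ev i - sg i *: ev ord0) ord0 k = 0.
    move=> k hk; rewrite !mxE.
    have -> : (k == i) = false by apply/negbTE/eqP => e; move: hk; rewrite e leqNgt hi.
    have -> : (k == ord0) = false by apply/negbTE/eqP => e; move: hk; rewrite e leqn0; move/eqP => e2; move: hm; rewrite e2.
    by rewrite mulr0 subr0.
  have := horth _ hx1 hx2; rewrite dotBr dotZr !dot_evr.
  by move/eqP; rewrite subr_eq0 => /eqP.
pose Q := \sum_(k < n.+1 | (k < m)%N) sg k ^+ 2.
have hdot : y ord0 ord0 * Q = sg m.
  move: yL; rewrite /inL /dot (bigID (fun k : 'I_(n.+1) => (k < m)%N)) /=.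
  rewrite [X in _ + X](bigD1 m) /= ?ltnn //.
  rewrite [X in _ + (_ + X)]big1; last first.
    move=> k /andP [hk1 hk2]; rewrite yz ?mul0r //.
    rewrite -leqNgt in hk1; rewrite ltn_neqAle hk1 andbT; apply: contra hk2 => /eqP e; apply/eqP; apply: val_inj; exact: esym e.
  rewrite ym addr0 mulN1r /Q mulr_sumr.
  have -> : \sum_(i < n.+1 | (i < m)%N) y ord0 i * s ord0 i = \sum_(i < n.+1 | (i < m)%N) y ord0 ord0 * sg i ^+ 2.
    by apply: eq_bigr => i hi; rewrite hyi // expr2; ring.
  by move/eqP; rewrite subr_eq0 => /eqP.
have hQp : psum m <= Q.
  apply: ler_sum => k _; rewrite expr2 ler_peMl //; [exact: ltW (sg_gt0 _)| exact: sg_ge1].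
have hQ1 : 1 <= Q.
  rewrite /Q (bigD1 ord0) //= sg0 expr1n lerDl; apply: sumr_ge0 => k _; exact: sqr_ge0.
have hb := cm_bound m.
have hsm := sg_ge1 m.
have hy0 : 1 <= y ord0 ord0 by nia.
have hQb : Q <= 1 + psum m by nia.
move=> i hi.
have hdiff : sg i ^+ 2 - sg i <= Q - psum m.
  rewrite /Q /psum -sumrB (bigD1 i) //= lerDl; apply: sumr_ge0 => k _.
  rewrite expr2 subr_ge0 ler_peMl //; [exact: ltW (sg_gt0 _)| exact: sg_ge1].
have := sg_ge1 i; move: hdiff hQb; rewrite expr2; nia.
Qed.

Definition w (i : 'I_(n.+1)) : vec := ev (inord i.-1) - ev i.

Lemma flat (m : nat) (y : vec) : (m <= n.+1)%N ->
  (forall i : 'I_(n.+1), (i < m)%N -> sg i = 1) -> inL s y ->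
  (forall k : 'I_(n.+1), (m <= k)%N -> y ord0 k = 0) ->
  (forall i : 'I_(n.+1), (0 < i < m)%N -> dot y (w i) = 0) -> y = 0.
Proof.
move=> hmn hones hy hsupp hw.
have hconst : forall d : nat, (d < m)%N -> y ord0 (inord d) = y ord0 ord0.
  elim=> [|d IH] hd; first by congr (y ord0 _); apply: val_inj; rewrite /= inordK.
  have := hw (inord d.+1); rewrite /w dotBr !dot_evr inordK /=; last lia.
  rewrite IH; last lia.
  move=> /(_ hd) /eqP; rewrite subr_eq0 => /eqP <-.
  by [].
apply: dot_self_eq0.
rewrite /dot (sum_supp (m := m)); last by move=> k hk; rewrite hsupp // mul0r.
have -> : \sum_(k < n.+1 | (k < m)%N) y ord0 k * y ord0 k =
          y ord0 ord0 * \sum_(k < n.+1 | (k < m)%N) y ord0 k * s ord0 k.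
  rewrite mulr_sumr; apply: eq_bigr => k hk.
  by rewrite hones // mulr1 -(inord_val k) hconst // inord_val.
rewrite -(sum_supp (m := m)); last by move=> k hk; rewrite hsupp // mul0r.
by move: hy; rewrite /inL /dot => ->; rewrite mulr0.
Qed.

Lemma w_props (i : 'I_(n.+1)) : (0 < i)%N -> sg (inord i.-1) = sg i ->
  [/\ inL s (w i), w i != 0 & indec (w i)].
Proof.
move=> hi heq.
have hne : (i == inord i.-1) = false.
  apply/negbTE/eqP => e; have := congr1 (@nat_of_ord _) e; rewrite /= inordK.
    by move: hi; case: (nat_of_ord i) => // k _ /= /eqP; rewrite eqn_leq ltnn.
  by have := ltn_ord i; lia.
have wi : w i ord0 i = -1 by rewrite !mxE eqxx hne sub0r.
split.
- by rewrite /inL /w dotBl !dot_evl heq subrr.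
- by apply/eqP => e; move: wi; rewrite e mxE.
apply: (indecA wi) => k hk; rewrite !mxE (negbTE hk) subr0.
by case: (k == inord i.-1); [right|left].
Qed.

Lemma inord_eqE (a b : nat) : (a <= n)%N -> (b <= n)%N ->
  ((inord a : 'I_(n.+1)) == inord b) = (a == b).
Proof.
move=> ha hb; apply/eqP/eqP => [e|->] //.
by have := congr1 (@nat_of_ord _) e; rewrite !inordK.
Qed.

Lemma dot_w_succ (d : nat) : (0 < d)%N -> (d.+1 <= n)%N ->
  dot (w (inord d)) (w (inord d.+1)) = -1.
Proof.
move=> hd hdn.
rewrite /w !inordK /=; try lia.
rewrite dotBl !dot_evl !mxE !inord_eqE; try lia.
Qed.

Lemma labels (T : eqType) (t0 : T) (R : T -> vec -> Prop) :
  (forall a b x y, a != b -> R a x -> R b y -> dot x y = 0) ->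
  (forall x, inL s x -> x != 0 -> indec x -> exists t, R t x) ->
  exists t1 t2, forall j : 'I_(n.+1), (0 < j)%N -> R t1 (u j) \/ R t2 (u j).
Proof.
move=> horth hcov.
have ulab : forall j : 'I_(n.+1), (0 < j)%N -> exists t, R t (u j).
  move=> j hj; have [uL um _ ui] := hu hj; apply: hcov => //.
  by apply/eqP => e; move: um; rewrite e mxE.
suff: forall m, (m <= n.+1)%N -> exists t1 t2, forall j : 'I_(n.+1), (0 < j)%N -> (j < m)%N ->
        R t1 (u j) \/ R t2 (u j).
  move/(_ n.+1 (leqnn _)) => [t1 [t2 h]]; exists t1, t2 => j hj; exact: h j hj (ltn_ord j).
elim=> [|m IH] hm; first by exists t0, t0 => j _.
have [t1 [t2 h]] := IH (ltnW hm).
have [M hM] : {M : 'I_(n.+1) | nat_of_ord M = m} by exists (inord m); rewrite inordK.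
case: (posnP m) => hm0.
  by exists t1, t2 => j j0 jm; exfalso; lia.
have [t ht] := ulab M ltac:(rewrite hM; exact: hm0).
have split_j : forall j : 'I_(n.+1), (j < m.+1)%N -> (j < m)%N \/ j = M.
  move=> j jm; case: (ltngtP j m) => e; [by left|lia|right; apply: val_inj; rewrite /= hM; exact: e].
case: (classic (forall j : 'I_(n.+1), (0 < j)%N -> (j < m)%N -> R t1 (u j))) => [H1|H1].
  exists t1, t; move=> j j0 jm; case: (split_j j jm) => [jlt|->]; [left; exact: H1 | by right].
case: (classic (forall j : 'I_(n.+1), (0 < j)%N -> (j < m)%N -> R t2 (u j))) => [H2|H2].
  exists t2, t; move=> j j0 jm; case: (split_j j jm) => [jlt|->]; [left; exact: H2 | by right].
case: (eqVneq t t1) => [e1|n1].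
  exists t1, t2 => j j0 jm; case: (split_j j jm) => [jlt|->]; [exact: h | by left; rewrite -e1].
case: (eqVneq t t2) => [e2|n2].
  exists t1, t2 => j j0 jm; case: (split_j j jm) => [jlt|->]; [exact: h | by right; rewrite -e2].
exfalso.
have [j1 [j10 [j1m nR1]]] : exists j1 : 'I_(n.+1), [/\ (0 < j1)%N, (j1 < m)%N & ~ R t1 (u j1)].
  apply: NNPP => hne; apply: H1; move=> jj jj0 jjm; apply: NNPP => hr; apply: hne.
  by exists jj; split.
have [j2 [j20 [j2m nR2]]] : exists j2 : 'I_(n.+1), [/\ (0 < j2)%N, (j2 < m)%N & ~ R t2 (u j2)].
  apply: NNPP => hne; apply: H2; move=> jj jj0 jjm; apply: NNPP => hr; apply: hne.
  by exists jj; split.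
have R2j1 : R t2 (u j1) by case: (h j1 j10 j1m).
have R1j2 : R t1 (u j2) by case: (h j2 j20 j2m).
have orthM : forall j : 'I_(n.+1), (0 < j)%N -> (j < m)%N -> dot (u M) (u j) = 0.
  move=> j j0 jm; case: (h j j0 jm) => hr.
    exact: horth n1 ht hr.
  exact: horth n2 ht hr.
have horthx : forall x, inL s x -> (forall k : 'I_(n.+1), (M <= k)%N -> x ord0 k = 0) -> dot (u M) x = 0.
  move=> x hx hsupp; apply: (orth_span orthM hx) => k hk; apply: hsupp; rewrite hM; exact: hk.
have hones' := @ones_prefix M ltac:(rewrite hM; exact: hm0) horthx.
have hones : forall i : 'I_(n.+1), (i < m)%N -> sg i = 1 by move=> i hi; apply: hones'; rewrite hM.
have hm2 : (1 < m)%N by lia.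
have wp : forall d : nat, (0 < d)%N -> (d < m)%N ->
    [/\ inL s (w (inord d)), w (inord d) != 0 & indec (w (inord d))].
  move=> d d0 dm; apply: w_props; rewrite ?inordK //; try lia.
  by rewrite !hones ?inordK //; lia.
have [ts hts] : exists ts, R ts (w (inord 1)).
  by have [? ? ?] := wp 1%N isT hm2; apply: hcov.
have allw : forall d : nat, (0 < d)%N -> (d < m)%N -> R ts (w (inord d)).
  elim=> [|d IHd] // d0 dm.
  case: (posnP d) => hd0; first by rewrite hd0.
  have [? ? ?] := wp d.+1 d0 dm.
  have [s' hs'] : exists s', R s' (w (inord d.+1)) by apply: hcov.
  case: (eqVneq s' ts) => [<- //|ne].
  have := horth _ _ _ _ ne hs' (IHd hd0 (ltnW dm)).
  by rewrite dotC dot_w_succ //; lia.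
have killed : forall y, inL s y -> (forall k : 'I_(n.+1), (m <= k)%N -> y ord0 k = 0) ->
    (forall d : nat, (0 < d)%N -> (d < m)%N -> dot y (w (inord d)) = 0) -> y = 0.
  move=> y hy hsupp hw; apply: (flat (ltnW hm) hones hy hsupp) => i /andP [i0 im].
  by rewrite -(inord_val i); apply: hw.
have uz : forall j : 'I_(n.+1), (0 < j)%N -> (j < m)%N -> u j != 0.
  by move=> j j0 _; have [_ um _ _] := hu j0; apply/eqP => e; move: um; rewrite e mxE.
have usupp : forall j : 'I_(n.+1), (0 < j)%N -> (j < m)%N ->
    forall k : 'I_(n.+1), (m <= k)%N -> u j ord0 k = 0.
  move=> j j0 jm k hk; have [_ _ uzz _] := hu j0; apply: uzz; lia.
case: (eqVneq ts t2) => [ets|nts].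
  have nt1 : t1 != ts.
    by apply/eqP => e; apply: nR1; rewrite e ets.
  move/eqP: (uz j2 j20 j2m); apply; apply: killed.
  - by have [] := hu j20.
  - exact: usupp.
  by move=> d d0 dm; apply: horth nt1 R1j2 (allw d d0 dm).
move/eqP: (uz j1 j10 j1m); apply; apply: killed.
- by have [] := hu j10.
- exact: usupp.
by move=> d d0 dm; apply: horth _ R2j1 (allw d d0 dm); rewrite eq_sym.
Qed.

Definition is_split (P Q : vec -> Prop) :=
  [/\ forall x, P x -> inL s x, forall x, Q x -> inL s x,
      forall x y, P x -> Q y -> dot x y = 0 &
      forall x, inL s x -> exists p q, [/\ P p, Q q & x = p + q]].

Section Superbase.
Variable K : nat.
Variable v : 'I_K -> vec.
Hypothesis hsum : \sum_i v i = 0.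

Local Notation G i j := (dot (v i) (v j)).

Lemma dot_combo (c d : 'I_K -> int) :
  dot (\sum_i c i *: v i) (\sum_j d j *: v j) = \sum_i \sum_j c i * d j * G i j.
Proof.
rewrite dot_suml; apply: eq_bigr => i _; rewrite dotZl dot_sumr mulr_sumr.
by apply: eq_bigr => j _; rewrite dotZr; ring.
Qed.

Lemma rowG0 i : \sum_j G i j = 0.
Proof. by rewrite -dot_sumr hsum dot0r. Qed.

Lemma colG0 j : \sum_i G i j = 0.
Proof. by rewrite -dot_suml hsum dot0l. Qed.

Lemma lap (c d : 'I_K -> int) :
  2 * dot (\sum_i c i *: v i) (\sum_j d j *: v j) =
  - \sum_i \sum_j (c i - c j) * (d i - d j) * G i j.
Proof.
rewrite dot_combo.
pose S1 := \sum_i \sum_j c i * d i * G i j.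
pose S2 := \sum_i \sum_j c j * d j * G i j.
pose S3 := \sum_i \sum_j c i * d j * G i j.
pose S4 := \sum_i \sum_j c j * d i * G i j.
have -> : \sum_i \sum_j (c i - c j) * (d i - d j) * G i j = S1 + S2 - S3 - S4.
  rewrite /S1 /S2 /S3 /S4 -big_split -sumrB -sumrB /=; apply: eq_bigr => i _.
  rewrite -big_split -sumrB -sumrB /=; apply: eq_bigr => j _; ring.
have -> : S1 = 0.
  rewrite /S1 big1 // => i _; rewrite -mulr_sumr rowG0; exact: mulr0.
have -> : S2 = 0.
  rewrite /S2 exchange_big big1 //= => j _; rewrite -mulr_sumr colG0; exact: mulr0.
have -> : S4 = S3.
  rewrite /S4 /S3 exchange_big /=; apply: eq_bigr => i _; apply: eq_bigr => j _.
  by rewrite dotC; ring.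
rewrite /S3; ring.
Qed.

Hypothesis hobt : forall i j, i != j -> G i j <= 0.
Hypothesis hspan : forall x, inL s x -> exists c : 'I_K -> int, x = \sum_i c i *: v i.
Hypothesis hvL : forall i, inL s (v i).

Lemma inL_sum (Pr : pred 'I_K) (f : 'I_K -> int) : inL s (\sum_(i | Pr i) f i *: v i).
Proof.
rewrite /inL dot_suml big1 // => i _; rewrite dotZl hvL; exact: mulr0.
Qed.

Lemma sum_delta (Pr : pred 'I_K) b : Pr b -> \sum_(i | Pr i) (i == b)%:R *: v i = v b.
Proof.
move=> hb; rewrite (bigD1 b) //= eqxx scale1r big1 ?addr0 // => i /andP [_ /negbTE ->].
by rewrite scale0r.
Qed.

Lemma sum_ind (Pr : pred 'I_K) : \sum_(i | Pr i) v i = \sum_i (Pr i)%:R *: v i.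
Proof.
rewrite big_mkcond; apply: eq_bigr => i _; case: (Pr i); by rewrite ?scale1r ?scale0r.
Qed.

Lemma red_split (a : 'I_K) : reducible s (v a) -> exists P Q : vec -> Prop,
  [/\ is_split P Q,
      exists p q, [/\ P p, Q q, p != 0, q != 0 & v a = p + q] &
      forall b, b != a -> P (v b) \/ Q (v b)].
Proof.
move=> [haL [ha0 hnirr]].
have [x [y [hxL hyL hx0 hy0 [hxy hdot]]]] : exists x y,
    [/\ inL s x, inL s y, x != 0, y != 0 & (v a = x + y /\ 0 <= dot x y)].
  apply: NNPP => hne; apply: hnirr; split => //; split => // x y hx hy hx0 hy0 he.
  case: (lerP (dot x y) (-1)) => // hlt; exfalso; apply: hne; exists x, y; split => //; lia.
have [c hc] := hspan hxL.
pose d i := (i == a)%:R - c i.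
have hy : y = \sum_i d i *: v i.
  rewrite /d; under eq_bigr => i _ do rewrite scalerBl.
  rewrite sumrB -hc (@sum_delta predT a) //.
  by rewrite hxy addrC addKr.
have h2 := lap c d; rewrite -hc -hy in h2.
pose h i j := (c i - c j) * (d i - d j) * G i j.
have he : forall i j, -1 <= ((i == a)%:R - (j == a)%:R : int) <= 1.
  by move=> i j; case: (i == a); case: (j == a).
have hh0 : forall i j, 0 <= h i j.
  move=> i j; rewrite /h; case: (eqVneq i j) => [->|hij]; first by rewrite subrr !mul0r.
  have hg := hobt hij; have hb := he i j; rewrite /d.
  set e := ((i == a)%:R - (j == a)%:R : int) in hb.
  have -> : (i == a)%:R - c i - ((j == a)%:R - c j) = e - (c i - c j) by rewrite /e; ring.
  apply: mulr_le0 => //; set t := c i - c j; clearbody e t.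
  have : (t <= -1) \/ (t = 0) \/ (1 <= t) by lia.
  case=> [ht|[->|ht]]; [nia|by rewrite mul0r|nia].
have hH : forall i, 0 <= \sum_j h i j by move=> i; apply: sumr_ge0 => j _.
have hsum0 : \sum_i \sum_j h i j = 0.
  move: h2; set S := (X in _ = - X) => h2'.
  have hge : 0 <= S by rewrite /S; apply: sumr_ge0 => i _; apply: sumr_ge0 => j _; apply: hh0.
  have hS : S = 0 by lia.
  exact: hS.
have hall : forall i j, h i j = 0.
  move=> i j.
  have hi := @psumr_eq0P _ _ predT (fun i => \sum_j h i j) (fun i _ => hH i) hsum0 i isT.
  exact: (@psumr_eq0P _ _ predT (h i) (fun j _ => hh0 i j) hi j isT).
have KF : forall i j, G i j != 0 -> (c i - c j) * (d i - d j) = 0.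
  move=> i j hg; have := hall i j; rewrite /h => /eqP; rewrite mulf_eq0 (negbTE hg) orbF.
  by move/eqP.
pose S := fun i => (i != a) && (c i == c a).
pose T := fun i => (i != a) && ~~ (c i == c a).
pose P := fun z => exists f : 'I_K -> int, z = \sum_(i | S i) f i *: v i.
pose Q := fun z => exists f : 'I_K -> int, z = \sum_(i | T i) f i *: v i.
have hST : forall i j, S i -> T j -> G i j = 0.
  move=> i j /andP [hia /eqP hica] /andP [hja hjca].
  apply/eqP; apply: contraT => hg; have := KF i j hg.
  rewrite /d (negbTE hia) (negbTE hja) hica.
  move/eqP: hjca => hjca; move=> e; have : c j = c a by nia.
  by move/hjca.
have hsplit : is_split P Q.
  split.
  - by move=> z [f ->]; apply: inL_sum.
  - by move=> z [f ->]; apply: inL_sum.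
  - move=> z1 z2 [f ->] [g ->]; rewrite dot_suml big1 // => i hi.
    rewrite dotZl dot_sumr big1 ?mulr0 // => j hj; rewrite dotZr hST //; exact: mulr0.
  move=> z hz; have [g hg] := hspan hz.
  have -> : z = \sum_i (g i - g a) *: v i.
    under eq_bigr => i _ do rewrite scalerBl.
    by rewrite sumrB -scaler_sumr hsum scaler0 subr0.
  rewrite (bigD1 a) //= subrr scale0r add0r (bigID (fun i => c i == c a)) /=.
  by eexists; eexists; split; [exists (fun i => g i - g a) | exists (fun i => g i - g a) | ].
exists P, Q; split => //; last first.
  move=> b hb; case: (boolP (c b == c a)) => hcb.
    by left; exists (fun i => (i == b)%:R); rewrite sum_delta //; apply/andP.
  by right; exists (fun i => (i == b)%:R); rewrite sum_delta //; apply/andP.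
exists (\sum_(i | S i) (-1) *: v i), (\sum_(i | T i) (-1) *: v i).
have hva : v a = \sum_(i | S i) (-1) *: v i + \sum_(i | T i) (-1) *: v i.
  move: hsum; rewrite (bigD1 a) //= (bigID (fun i => c i == c a)) /= => /eqP.
  rewrite addr_eq0 => /eqP ->.
  by rewrite -!scaler_sumr !scaleN1r opprD.
have hnz : forall z : vec, z != 0 -> dot z z != 0.
  by move=> z hz; apply: contra hz => /eqP /dot_self_eq0 ->.
have hpS : dot (\sum_(i | S i) v i) (\sum_(i | S i) v i) = dot y y.
  have e1 := lap (fun i => (S i)%:R) (fun i => (S i)%:R); rewrite -!(sum_ind S) in e1.
  have e2 := lap d d; rewrite -hy in e2.
  suff hq : \sum_i \sum_j ((S i)%:R - (S j)%:R) * ((S i)%:R - (S j)%:R) * G i j =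
            \sum_i \sum_j (d i - d j) * (d i - d j) * G i j.
    move: e1 e2; rewrite hq => h1 h3.
    have h4 : 2 * dot (\sum_(i | S i) v i) (\sum_(i | S i) v i) = 2 * dot y y := etrans h1 (esym h3).
    lia.
  apply: eq_bigr => i _; apply: eq_bigr => j _.
  case: (eqVneq (G i j) 0) => [->|hg]; first by rewrite !mulr0.
  have hk := KF i j hg; move: hk.
  suff hsq : forall hk : (c i - c j) * (d i - d j) = 0,
      ((S i)%:R - (S j)%:R) * ((S i)%:R - (S j)%:R) = (d i - d j) * (d i - d j) :> int.
    by move=> hk; rewrite (hsq hk).
  rewrite /S /d; case: (eqVneq i a) => [->|hia]; case: (eqVneq j a) => [->|hja] /=;
    rewrite ?eqxx ?(negbTE hia) ?(negbTE hja) /=.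
  - by move=> _; rewrite !subrr.
  - by case: eqP => hc2 /= hk; nia.
  - by case: eqP => hc2 /= hk; nia.
  by case: (@eqP _ (c i) (c a)) => hci; case: (@eqP _ (c j) (c a)) => hcj /= hk; nia.
have hpT : dot (\sum_(i | T i) v i) (\sum_(i | T i) v i) = dot x x.
  have e1 := lap (fun i => (T i)%:R) (fun i => (T i)%:R); rewrite -!(sum_ind T) in e1.
  have e2 := lap c c; rewrite -hc in e2.
  suff hq : \sum_i \sum_j ((T i)%:R - (T j)%:R) * ((T i)%:R - (T j)%:R) * G i j =
            \sum_i \sum_j (c i - c j) * (c i - c j) * G i j.
    move: e1 e2; rewrite hq => h1 h3.
    have h4 : 2 * dot (\sum_(i | T i) v i) (\sum_(i | T i) v i) = 2 * dot x x := etrans h1 (esym h3).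
    lia.
  apply: eq_bigr => i _; apply: eq_bigr => j _.
  case: (eqVneq (G i j) 0) => [->|hg]; first by rewrite !mulr0.
  have hk := KF i j hg; move: hk.
  suff hsq : forall hk : (c i - c j) * (d i - d j) = 0,
      ((T i)%:R - (T j)%:R) * ((T i)%:R - (T j)%:R) = (c i - c j) * (c i - c j) :> int.
    by move=> hk; rewrite (hsq hk).
  rewrite /T /d; case: (eqVneq i a) => [->|hia]; case: (eqVneq j a) => [->|hja] /=;
    rewrite ?eqxx ?(negbTE hia) ?(negbTE hja) /=.
  - by move=> _; rewrite !subrr.
  - by case: eqP => hc' /= hk; nia.
  - by case: eqP => hc' /= hk; nia.
  by case: (@eqP _ (c i) (c a)) => hci; case: (@eqP _ (c j) (c a)) => hcj /= hk; nia.
split.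
- by exists (fun _ => -1).
- by exists (fun _ => -1).
- rewrite -scaler_sumr scaleN1r oppr_eq0; apply: contra (hnz _ hy0) => /eqP h0.
  by rewrite -hpS h0 dot0l.
- rewrite -scaler_sumr scaleN1r oppr_eq0; apply: contra (hnz _ hx0) => /eqP h0.
  by rewrite -hpT h0 dot0l.
exact: hva.
Qed.
End Superbase.

Lemma no_two_splits (P1 Q1 P2 Q2 : vec -> Prop) :
  is_split P1 Q1 -> is_split P2 Q2 ->
  (exists p q, [/\ P1 p, Q1 q, p != 0 & q != 0]) ->
  (exists B p q, [/\ P2 p, Q2 q, p != 0, q != 0 & B = p + q] /\ (P1 B \/ Q1 B)) -> False.
Proof.
move=> [P1L Q1L PQ1 dec1] [P2L Q2L PQ2 dec2] [p1 [q1 [hp1 hq1 p10 q10]]]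
  [B [p2 [q2 [[hp2 hq2 p20 q20 hB] hB1]]]].
pose X1 (g : bool) := if g then P1 else Q1.
pose X2 (g : bool) := if g then P2 else Q2.
have X1L : forall g x, X1 g x -> inL s x by case=> x /=; [apply: P1L | apply: Q1L].
have X2L : forall g x, X2 g x -> inL s x by case=> x /=; [apply: P2L | apply: Q2L].
have orth1 : forall g x y, X1 g x -> X1 (~~ g) y -> dot x y = 0.
  by case=> x y /= hx hy; [apply: PQ1 | rewrite dotC; apply: PQ1].
have orth2 : forall g x y, X2 g x -> X2 (~~ g) y -> dot x y = 0.
  by case=> x y /= hx hy; [apply: PQ2 | rewrite dotC; apply: PQ2].
pose R (t : bool * bool) x := X1 t.1 x /\ X2 t.2 x.
have horth : forall a b x y, a != b -> R a x -> R b y -> dot x y = 0.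
  move=> [a1 a2] [b1 b2] x y hab [hx1 hx2] [hy1 hy2] /=.
  case: (eqVneq a1 b1) => e1.
    have e2 : b2 = ~~ a2 by move: hab; rewrite e1; case: (a2); case: (b2); rewrite ?eqxx.
    by apply: (orth2 a2); rewrite // -e2.
  have e1' : b1 = ~~ a1 by move: e1; case: (a1); case: (b1).
  by apply: (orth1 a1); rewrite // -e1'.
have hcov : forall x, inL s x -> x != 0 -> indec x -> exists t, R t x.
  move=> x hx hx0 hind.
  have [g1 hg1] : exists g, X1 g x.
    have [p [q [hp hq e]]] := dec1 x hx.
    case: (hind p q (P1L _ hp) (Q1L _ hq) (esym e) (PQ1 _ _ hp hq)) => h0.
      by exists false; rewrite /= e h0 add0r.
    by exists true; rewrite /= e h0 addr0.
  have [g2 hg2] : exists g, X2 g x.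
    have [p [q [hp hq e]]] := dec2 x hx.
    case: (hind p q (P2L _ hp) (Q2L _ hq) (esym e) (PQ2 _ _ hp hq)) => h0.
      by exists false; rewrite /= e h0 add0r.
    by exists true; rewrite /= e h0 addr0.
  by exists (g1, g2).
have [[g1 d1] [[g2 d2] hc]] := labels (true, true) horth hcov.
have killer : forall z, inL s z -> (forall j : 'I_(n.+1), (0 < j)%N -> dot z (u j) = 0) -> z = 0.
  move=> z hz hzu; apply: dot_self_eq0; apply: (orth_span (m := n.+1)) => //.
    by move=> j j0 _; apply: hzu.
  by move=> k hk; have := ltn_ord k; lia.
have eg : g2 = ~~ g1.
  case: (eqVneq g2 (~~ g1)) => // hne; exfalso.
  have eg : g2 = g1 by move: hne; case: (g1); case: (g2).
  have [w [hw hw0]] : exists w, X1 (~~ g1) w /\ w != 0.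
    by case: g1 {eg hne hc} => /=; [exists q1 | exists p1].
  move/eqP: hw0; apply; apply: killer; first exact: X1L hw.
  move=> j j0; have hu1 : X1 g1 (u j) by case: (hc j j0) => [[]|[]] //; rewrite eg.
  rewrite dotC; apply: (orth1 g1) => //.
have ed : d2 = ~~ d1.
  case: (eqVneq d2 (~~ d1)) => // hne; exfalso.
  have ed : d2 = d1 by move: hne; case: (d1); case: (d2).
  have [w [hw hw0]] : exists w, X2 (~~ d1) w /\ w != 0.
    by case: d1 {ed hne hc} => /=; [exists q2 | exists p2].
  move/eqP: hw0; apply; apply: killer; first exact: X2L hw.
  move=> j j0; have hu1 : X2 d1 (u j) by case: (hc j j0) => [[]|[]] //; rewrite ed.
  rewrite dotC; apply: (orth2 d1) => //.
have key : forall g d, (forall j : 'I_(n.+1), (0 < j)%N -> R (g, d) (u j) \/ R (~~ g, ~~ d) (u j)) ->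
    X1 g B -> False.
  move=> g d hcv hBg.
  have [x [y [hx hy hx0 hBxy]]] : exists x y, [/\ X2 (~~ d) x, X2 d y, x != 0 & B = y + x].
    case: (d) => /=; [exists q2, p2 | exists p2, q2]; split => //; by rewrite hB // addrC.
  move/eqP: hx0; apply; apply: killer; first exact: X2L hx.
  move=> j j0; case: (hcv j j0) => [[hu1 hu2]|[hu1 hu2]] /=.
    by rewrite dotC; apply: (orth2 d).
  have -> : x = B - y by rewrite hBxy addrC addKr.
  rewrite dotBl (orth1 g B (u j)) // (orth2 d y (u j)) //; exact: subrr.
have [gB hgB] : exists g, X1 g B by case: hB1 => h; [exists true | exists false].
case: (eqVneq gB g1) => e.
  apply: (key g1 d1); last by rewrite -e.
  by move=> j j0; rewrite -eg -ed; apply: hc.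
apply: (key (~~ g1) (~~ d1)); last by move: e hgB; case: (gB); case: (g1).
by move=> j j0; rewrite !negbK -eg -ed; case: (hc j j0); [right | left].
Qed.

Lemma sum_neq_lift (F : 'I_(n.+1) -> vec) (j : 'I_(n.+1)) :
  \sum_(i | i != j) F i = \sum_(l < n) F (lift j l).
Proof.
have e1 : \sum_i F i = F j + \sum_(i | i != j) F i := bigD1 j isT.
have e2 : \sum_i F i = F j + \sum_(l < n) F (lift j l) := bigD1_ord j (P := xpredT) isT.
by apply: (@addrI _ (F j)); rewrite -e1 -e2.
Qed.

Lemma row_ev (x : vec) : x = \sum_c x ord0 c *: ev c.
Proof.
apply/rowP => c; rewrite summxE (bigD1 c) //= big1 => [|i /negbTE hi].
  by rewrite !mxE eqxx mulr1 addr0.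
by rewrite !mxE eq_sym hi mulr0.
Qed.

Definition fvec (l : 'I_n) : vec := ev (lift ord0 l) - sg (lift ord0 l) *: ev ord0.

Lemma expand_f (x : vec) : inL s x -> x = \sum_(k < n) x ord0 (lift ord0 k) *: fvec k.
Proof.
move=> hx.
have e1 : \sum_c x ord0 c *: ev c = x ord0 ord0 *: ev ord0 + \sum_(k < n) x ord0 (lift ord0 k) *: ev (lift ord0 k)
  := bigD1_ord ord0 (P := xpredT) isT.
have e2 : \sum_c x ord0 c * sg c = x ord0 ord0 * sg ord0 + \sum_(k < n) x ord0 (lift ord0 k) * sg (lift ord0 k)
  := bigD1_ord ord0 (P := xpredT) isT.
have hx' : \sum_c x ord0 c * sg c = 0 by exact: hx.
rewrite /fvec.
under eq_bigr => k _ do rewrite scalerBr scalerA.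
rewrite sumrB -scaler_suml.
have -> : \sum_(k < n) x ord0 (lift ord0 k) * sg (lift ord0 k) = - x ord0 ord0.
  by move: e2; rewrite hx' sg0 mulr1; lia.
have -> : \sum_(k < n) x ord0 (lift ord0 k) *: ev (lift ord0 k) = x - x ord0 ord0 *: ev ord0.
  by apply/eqP; rewrite eq_sym subr_eq addrC -e1 -row_ev.
by rewrite scaleNr opprK subrK.
Qed.

Lemma indep (v : 'I_(n.+1) -> vec) (j : 'I_(n.+1)) :
  (forall i, inL s (v i)) ->
  (forall x, inL s x -> exists c : 'I_(n.+1) -> int, x = \sum_(i | i != j) c i *: v i) ->
  forall c : 'I_(n.+1) -> int, \sum_(i | i != j) c i *: v i = 0 -> forall i, i != j -> c i = 0.
Proof.
move=> hvL hspan c hc i hij.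
pose Umx : 'M[int]_(n, n.+1) := \matrix_l fvec l.
pose Vmx : 'M[int]_(n, n.+1) := \matrix_l v (lift j l).
have hUind : forall cr : 'rV[int]_n, cr *m Umx = 0 -> cr = 0.
  move=> cr hcr; apply/rowP => k; rewrite mxE.
  have := congr1 (fun M : 'rV[int]_(n.+1) => M ord0 (lift ord0 k)) hcr.
  rewrite mulmx_sum_row /= !mxE summxE (bigD1 k) //= big1.
    rewrite rowK /fvec !mxE eqxx /= => h; have h2 : cr 0 k = 0 by lia.
    exact: h2.
  move=> l hl; rewrite rowK /fvec !mxE /=.
  have -> : (lift ord0 k == lift ord0 l) = false.
    by apply/negbTE; apply: contra hl => /eqP /lift_inj ->.
  by rewrite mulr0 subr0 mulr0.
have hfL : forall l, inL s (fvec l) by move=> l; rewrite /inL /fvec dotBl dotZl !dot_evl sg0 mulr1 subrr.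
pose A : 'M[int]_n := \matrix_(l, k) v (lift j l) ord0 (lift ord0 k).
have hVA : Vmx = A *m Umx.
  apply/row_matrixP => l; rewrite row_mul !rowK mulmx_sum_row.
  rewrite {1}(expand_f (hvL (lift j l))); apply: eq_bigr => k _; rewrite !rowK !mxE.
  by [].
have [cf hcf] : exists cf : 'I_n -> ('I_(n.+1) -> int), forall l, fvec l = \sum_(i | i != j) cf l i *: v i.
  apply: (@fin_all_exists _ (fun _ => 'I_(n.+1) -> int) (fun l c => fvec l = \sum_(i | i != j) c i *: v i)).
  by move=> l; apply: hspan.
pose M : 'M[int]_n := \matrix_(l, k) cf l (lift j k).
have hUM : Umx = M *m Vmx.
  apply/row_matrixP => l; rewrite row_mul !rowK mulmx_sum_row hcf sum_neq_lift.
  by apply: eq_bigr => k _; rewrite !rowK !mxE.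
have hMA : M *m A = 1%:M.
  have h0 : (M *m A - 1%:M) *m Umx = 0 by rewrite mulmxBl -mulmxA -hVA -hUM mul1mx subrr.
  apply/eqP; rewrite -subr_eq0; apply/eqP; apply/row_matrixP => l.
  rewrite row0; apply: hUind; by rewrite -row_mul h0 row0.
have hAM := mulmx1C hMA.
pose cr : 'rV[int]_n := \row_k c (lift j k).
have hcr : cr *m Vmx = 0.
  rewrite mulmx_sum_row; rewrite sum_neq_lift in hc; rewrite -[RHS]hc.
  by apply: eq_bigr => k _; rewrite !rowK !mxE.
have hcrA : cr *m A = 0 by apply: hUind; rewrite -mulmxA -hVA.
have hcr0 : cr = 0 by rewrite -[cr]mulmx1 -hAM mulmxA hcrA mul0mx.
case: (unliftP j i) => [k ->|e]; last by move: hij; rewrite e eqxx.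
by have := congr1 (fun z : 'rV[int]_n => z ord0 k) hcr0; rewrite !mxE.
Qed.
End CM.
Unset Implicit Arguments.

Theorem lemma4p5 (r : nat) (s : 'rV[int]_r)
  (hs : changemaker s)
  (hlast : exists i : 'I_r, val i = r.-1 /\ 2 <= s ord0 i)
  (v : 'I_(r.-1).+1 -> 'rV[int]_r)
  (hv : obtuse_superbase s v) :
  (forall i j, reducible s (v i) -> reducible s (v j) -> i = j) /\
  (exists j, (forall i, i != j -> irreducible s (v i)) /\
             basisL s (fun i => i != j) v).
Proof.
case: r s hs hlast v hv => [|n] s hs hlast v hv.
  by case: hlast => [[m hm] _].
case: hv => [[hvL0 hspan0] [hobt hsum]].
have hvL : forall i, inL s (v i) by move=> i; apply: hvL0.
have hspan : forall x, inL s x -> exists c : 'I_(n.+1) -> int, x = \sum_i c i *: v i.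
  by move=> x hx; have [c hc] := hspan0 x hx; exists c.
have hex : forall j : 'I_(n.+1), exists x : 'rV[int]_(n.+1), (0 < j)%N ->
    [/\ inL s x, x ord0 j = -1, (forall k : 'I_(n.+1), (j < k)%N -> x ord0 k = 0) & indec s x].
  move=> j; case: (posnP j) => hj.
    by exists 0.
  by have [x hx] := exists_u hs hj; exists x.
have [u hu] := fin_all_exists hex.
have part1 : forall i j, reducible s (v i) -> reducible s (v j) -> i = j.
  move=> i j hi hj; case: (eqVneq i j) => // hij; exfalso.
  have [P1 [Q1 [sp1 [p1 [q1 [hp1 hq1 p10 q10 hva]]] hb1]]] := red_split hsum hobt hspan hvL hi.
  have [P2 [Q2 [sp2 [p2 [q2 [hp2 hq2 p20 q20 hvb]]] hb2]]] := red_split hsum hobt hspan hvL hj.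
  apply: (no_two_splits hs hu sp1 sp2); first by exists p1, q1.
  exists (v j), p2, q2; split => //; apply: hb1; rewrite eq_sym.
  exact: hij.
split; first exact: part1.
have [j hj] : exists j, forall i, reducible s (v i) -> i = j.
  case: (classic (exists j, reducible s (v j))) => [[j hj]|hno].
    by exists j => i hi; apply: part1 hi hj.
  by exists ord0 => i hi; exfalso; apply: hno; exists i.
exists j.
have hspanj : forall x, inL s x -> exists c : 'I_(n.+1) -> int, x = \sum_(i | i != j) c i *: v i.
  move=> x hx; have [c ->] := hspan x hx; exists (fun i => c i - c j).
  have -> : \sum_i c i *: v i = \sum_i (c i - c j) *: v i.
    under [RHS]eq_bigr => i _ do rewrite scalerBl.
    by rewrite sumrB -scaler_sumr hsum scaler0 subr0.
  by rewrite (bigD1 j) //= subrr scale0r add0r.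
have hind := indep hs hvL hspanj.
split.
  move=> i hij.
  have hvi0 : v i != 0.
    apply/eqP => e.
    have hs0 : \sum_(k | k != j) (k == i)%:R *: v k = 0 by rewrite sum_delta.
    by have := hind (fun k => (k == i)%:R) hs0 i hij; rewrite eqxx => /eqP; rewrite oner_eq0.
  apply: NNPP => hnirr.
  have /hj e : reducible s (v i) by split => //; split.
  by move: hij; rewrite e eqxx.
split; first split.
- by move=> i _; apply: hvL.
- exact: hspanj.
by move=> c hc i hi; apply: hind hc i hi.
Qed.
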